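(* Let $n\ge r\ge2$ be integers. Then $$B_n^{(r)}(x)=-2\,r^{n-1}\sum_{\substack{k\ge0\\ 2k+1\le r-1}}r^{-2k}\,\frac{s(r,r-2k-1)}{2k+1}\,\frac{\binom{n}{2k}}{\binom{r-1}{2k+1}}\,B_{n-2k}\!\left(\frac{x}{r}\right)\;-\;2\,r^{n-1}\sum_{\substack{k:\ 2k+1\ge r\\ 2k\le n}}r^{-2k}\,\frac{B^{(r)}_{2k+1}}{2k+1}\binom{n}{2k}B_{n-2k}\!\left(\frac{x}{r}\right),$$ where for $2k+1\ge r$, $$\frac{B^{(r)}_{2k+1}}{2k+1}=\binom{2k}{r-1}\sum_{j=1}^{r}(-1)^{j-1}s(r,j)\,\frac{B_{2k+1-r+j}}{2k+1-r+j}.$$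
   Context: For a positive integer $r$, the Bernoulli polynomials of order $r$ are defined by $\sum_{n\ge0}B_n^{(r)}(x)\frac{t^n}{n!}=\left(\frac{t}{e^t-1}\right)^re^{xt}$, and $B_n^{(r)}=B_n^{(r)}(0)$. $B_n(x)=B_n^{(1)}(x)$ are the Bernoulli polynomials and $B_m=B_m(0)$ the Bernoulli numbers. $s(n,l)$ denotes the (signed) Stirling numbers of the first kind, $x(x-1)\cdots(x-n+1)=\sum_l s(n,l)x^l$. *)

(* Defs.v *)
From HB Require Import structures.
From mathcomp Require Import all_boot all_order all_algebra.
Set Implicit Arguments. Unset Strict Implicit. Unset Printing Implicit Defensive.
Import Order.TTheory GRing.Theory Num.Theory.
Local Open Scope ring_scope.

Definition stirling1 (n l : nat) : int :=
  (\prod_(i < n) ('X - (i%:R)%:P) : {poly int})`_l.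

(* Bernoulli numbers B_m, from t/(e^t-1) = \sum B_m t^m/m!, i.e. via the
   coefficient identity (e^t-1)/t * \sum B_m t^m/m! = 1:
   \sum_{k<=m} C(m+1,k) B_k = [m = 0]. *)
Fixpoint bern_seq (R : numFieldType) (m : nat) : seq R :=
  match m with
  | 0 => [:: 1]
  | m'.+1 => let s := bern_seq R m' in
      rcons s (- (m'.+2%:R)^-1 * \sum_(k < m'.+1) ('C(m'.+2, k))%:R * s`_k)
  end.

Definition bernoulli (R : numFieldType) (m : nat) : R := (bern_seq R m)`_m.

(* Bernoulli polynomials of order r, evaluated at x:
   \sum_n B_n^(r)(x) t^n/n! = (t/(e^t-1))^r e^{xt}.
   Order 0: e^{xt}, so B_n^(0)(x) = x^n; order r+1 is the Cauchy (EGF) product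
   of t/(e^t-1) with the order-r series. *)
Fixpoint bernpoly_ord (R : numFieldType) (r n : nat) (x : R) : R :=
  match r with
  | 0 => x ^+ n
  | r'.+1 => \sum_(k < n.+1) ('C(n, k))%:R * bernoulli R k * bernpoly_ord r' (n - k) x
  end.

Definition bernnum_ord (R : numFieldType) (r n : nat) : R := bernpoly_ord r n 0.

Definition bernpoly (R : numFieldType) (n : nat) (x : R) : R := bernpoly_ord 1 n x.

(* Main.v *)
Require Import Defs.
From HB Require Import structures.
From mathcomp Require Import all_boot all_order all_algebra.
From mathcomp Require Import ring lra zify.
Import Order.TTheory GRing.Theory Num.Theory.
Set Implicit Arguments. Unset Strict Implicit. Unset Printing Implicit Defensive.
Local Open Scope ring_scope.

Section Eqm.
Variable R : numFieldType.
Implicit Types p q : {poly R}.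

Definition eqm (N : nat) p q := forall i, (i < N)%N -> p`_i = q`_i.

Lemma eqm_refl N p : eqm N p p. Proof. by []. Qed.
Lemma eqm_sym N p q : eqm N p q -> eqm N q p.
Proof. by move=> h i hi; rewrite h. Qed.
Lemma eqm_trans N p q s : eqm N p q -> eqm N q s -> eqm N p s.
Proof. by move=> h1 h2 i hi; rewrite h1 // h2. Qed.
Lemma eqm_le N M p q : (M <= N)%N -> eqm N p q -> eqm M p q.
Proof. by move=> hMN h i hi; apply: h; apply: leq_trans hMN. Qed.
Lemma eqm_eq N p q : p = q -> eqm N p q. Proof. by move->. Qed.
Lemma eqmD N p q p' q' : eqm N p p' -> eqm N q q' -> eqm N (p + q) (p' + q').
Proof. by move=> h1 h2 i hi; rewrite !coefD h1 // h2. Qed.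
Lemma eqmN N p q : eqm N p q -> eqm N (- p) (- q).
Proof. by move=> h i hi; rewrite !coefN h. Qed.
Lemma eqmB N p q p' q' : eqm N p p' -> eqm N q q' -> eqm N (p - q) (p' - q').
Proof. by move=> h1 h2; apply: eqmD => //; apply: eqmN. Qed.
Lemma eqmM N p q p' q' : eqm N p p' -> eqm N q q' -> eqm N (p * q) (p' * q').
Proof.
move=> h1 h2 i hi; rewrite !coefM; apply: eq_bigr => j _.
have hj : (j <= i)%N by rewrite -ltnS.
rewrite h1 ?h2 //; first by apply: leq_ltn_trans (leq_subr _ _) hi.
by apply: leq_ltn_trans hj hi.
Qed.
Lemma eqmMl N p q s : eqm N p q -> eqm N (s * p) (s * q).
Proof. by move=> h; apply: eqmM. Qed.
Lemma eqmMr N p q s : eqm N p q -> eqm N (p * s) (q * s).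
Proof. by move=> h; apply: eqmM. Qed.
Lemma eqmX N p q k : eqm N p q -> eqm N (p ^+ k) (q ^+ k).
Proof. by move=> h; elim: k => [|k IH]; rewrite ?expr0 // !exprS; apply: eqmM. Qed.

Definition theta p := 'X * p^`().
Lemma eqm_theta N p q : eqm N p q -> eqm N (theta p) (theta q).
Proof.
move=> h [|i] hi; rewrite /theta !coefXM //= !coef_deriv h //.
Qed.
Lemma thetaM p q : theta (p * q) = theta p * q + p * theta q.
Proof. by rewrite /theta derivM; ring. Qed.
Lemma thetaX p k : theta (p ^+ k.+1) = (k.+1)%:R%:P * p ^+ k * theta p.
Proof. rewrite /theta deriv_exp /= -mulr_natl polyC_natr; ring. Qed.
Lemma theta1 : theta 1 = 0.
Proof. by rewrite /theta -polyC1 derivC mulr0. Qed.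

Lemma eqm_Xcancel N p q : eqm N.+1 ('X * p) ('X * q) -> eqm N p q.
Proof. by move=> h i hi; have := h i.+1 hi; rewrite !coefXM. Qed.
Lemma eqm_Xmul N p q : eqm N p q -> eqm N.+1 ('X * p) ('X * q).
Proof. by move=> h [|i] hi; rewrite !coefXM //= h. Qed.

Definition sc (c : R) p := \poly_(i < size p) (c ^+ i * p`_i).
Lemma coef_sc c p i : (sc c p)`_i = c ^+ i * p`_i.
Proof.
rewrite /sc coef_poly; case: ltnP => // h.
by rewrite nth_default // mulr0.
Qed.
Lemma scM c p q : sc c (p * q) = sc c p * sc c q.
Proof.
apply/polyP => i; rewrite coef_sc !coefM mulr_sumr; apply: eq_bigr => j _.
rewrite !coef_sc.
have hj : (j <= i)%N by rewrite -ltnS.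
rewrite -{1}(subnKC hj) exprD; ring.
Qed.
Lemma sc1 c : sc c 1 = 1.
Proof.
apply/polyP => i; rewrite coef_sc coef1; case: i => [|i] /=; first by rewrite mulr1.
by rewrite mulr0.
Qed.
Lemma scX c p k : sc c (p ^+ k) = (sc c p) ^+ k.
Proof. by elim: k => [|k IH]; rewrite ?expr0 ?sc1 // !exprS scM IH. Qed.
Lemma eqm_sc N c p q : eqm N p q -> eqm N (sc c p) (sc c q).
Proof. by move=> h i hi; rewrite !coef_sc h. Qed.

End Eqm.


Section Bern.
Variable R : numFieldType.

Lemma natS_neq0 n : (n.+1)%:R != 0 :> R.
Proof. by rewrite pnatr_eq0. Qed.
Lemma nat2_neq0 n : 2 + n%:R != 0 :> R.
Proof. by have := natS_neq0 n.+1; rewrite -addn2 natrD addrC. Qed.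
Lemma nat1_neq0 n : 1 + n%:R != 0 :> R.
Proof. by rewrite -mulrS; apply: natS_neq0. Qed.
Lemma fact_neq0 n : (n`!)%:R != 0 :> R.
Proof. by rewrite pnatr_eq0 -lt0n fact_gt0. Qed.

Lemma fact_splitR n k : (k <= n)%N ->
  ((n`!)%:R)^-1 * ('C(n, k))%:R = ((k`!)%:R)^-1 * (((n - k)`!)%:R)^-1 :> R.
Proof.
move=> hk; have := bin_fact hk => /(congr1 (fun m => m%:R : R)).
rewrite !natrM => e.
have h1 := fact_neq0 k; have h2 := fact_neq0 (n - k); have h3 := fact_neq0 n.
have h4 : ('C(n, k))%:R != 0 :> R by rewrite pnatr_eq0 -lt0n bin_gt0.
rewrite -e; field; by rewrite h1 h2 h4.
Qed.

Lemma size_bern m : size (bern_seq R m) = m.+1.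
Proof. by elim: m => [|m IH] //=; rewrite size_rcons IH. Qed.

Lemma bern_prefix m k : (k <= m)%N -> (bern_seq R m)`_k = bernoulli R k.
Proof.
elim: m => [|m IH]; first by rewrite leqn0 => /eqP->.
rewrite leq_eqVlt => /orP[/eqP->//|hk].
by rewrite /= nth_rcons size_bern hk IH.
Qed.

Lemma bernoulliS m : bernoulli R m.+1 =
  - (m.+2%:R)^-1 * \sum_(k < m.+1) ('C(m.+2, k))%:R * bernoulli R k.
Proof.
rewrite /bernoulli /= nth_rcons size_bern ltnn eqxx.
by congr (_ * _); apply: eq_bigr => k _; rewrite bern_prefix // -ltnS.
Qed.

Lemma bernoulli0 : bernoulli R 0 = 1. Proof. by []. Qed.

Lemma bern_rec m :
  \sum_(k < m.+1) ('C(m.+1, k))%:R * bernoulli R k = (m == 0)%:R.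
Proof.
case: m => [|m]; first by rewrite big_ord1 bernoulli0 bin0 mulr1.
rewrite big_ord_recr /= bernoulliS binSn.
set S := \sum_(_ < _) _.
have h := natS_neq0 m.+1; field; by move: h; rewrite -addn2 natrD addrC.
Qed.

Definition Fb M : {poly R} := \poly_(i < M) (bernoulli R i / (i`!)%:R).
Definition Ee M : {poly R} := \poly_(i < M) ((i.+1)`!%:R)^-1.
Definition Ex M (c : R) : {poly R} := \poly_(i < M) (c ^+ i / (i`!)%:R).

Lemma F1 M : eqm M (Fb M * Ee M) 1.
Proof.
move=> i hi; rewrite coefM coef1.
transitivity (((i.+1)`!%:R)^-1 * \sum_(k < i.+1) ('C(i.+1, k))%:R * bernoulli R k).
  rewrite mulr_sumr; apply: eq_bigr => [[j hj]] _ /=.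
  rewrite !coef_poly (leq_ltn_trans _ hi) // ?(leq_ltn_trans (leq_subr _ _) hi) //.
  have hji : (j <= i)%N by rewrite -ltnS.
  rewrite mulrA fact_splitR ?(ltnW hj) // subSn //.
  ring.
rewrite bern_rec; case: i hi => [|i] _ /=; first by rewrite invr1 mulr1.
by rewrite mulr0.
Qed.

End Bern.


Section Ser.
Variable R : numFieldType.

Lemma coef_lt (M i j : nat) : (i < M)%N -> (j < i.+1)%N -> (j < M)%N.
Proof. by move=> hi hj; apply: leq_ltn_trans hi; rewrite -ltnS. Qed.
Lemma coef_lt' (M i j : nat) : (i < M)%N -> (i - j < M)%N.
Proof. by move=> hi; apply: leq_ltn_trans hi; rewrite leq_subr. Qed.

Lemma F2 M (c d : R) : eqm M (Ex M c * Ex M d) (Ex M (c + d)).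
Proof.
move=> i hi; rewrite coefM coef_poly hi addrC exprDn mulrC mulr_sumr.
apply: eq_bigr => [[j hj]] _.
rewrite !coef_poly (coef_lt hi hj) (coef_lt' j hi) -[_ *+ 'C(_, _)]mulr_natl.
rewrite [RHS]mulrA fact_splitR; last by rewrite -ltnS.
ring.
Qed.

Lemma Ex0 M : eqm M (Ex M (0 : R)) 1.
Proof.
move=> i hi; rewrite coef_poly hi coef1; case: i hi => [|i] _ /=.
  by rewrite expr0 divr1.
by rewrite expr0n mul0r.
Qed.

Lemma ExX M (r : nat) : eqm M (Ex M (1 : R) ^+ r) (Ex M r%:R).
Proof.
elim: r => [|r IH]; first by rewrite expr0; apply: eqm_sym; apply: Ex0.
rewrite exprSr; apply: eqm_trans (eqmMr _ IH) _.
by rewrite -addn1 natrD; apply: F2.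
Qed.

Lemma F3 M (c : R) : eqm M (Ex M c - 1) (c%:P * ('X * sc c (Ee R M))).
Proof.
move=> i hi; rewrite coefB coef_poly hi coefCM coefXM coef1.
case: i hi => [|i] hi /=; first by rewrite expr0 divr1 subrr mulr0.
rewrite subr0 coef_sc coef_poly (ltnW hi) exprS; ring.
Qed.

Lemma thetaEe M : eqm M (theta (Ee R M)) (Ex M 1 - Ee R M).
Proof.
move=> i hi; rewrite /theta coefXM coefB.
case: i hi => [|i] hi /=; first by rewrite !coef_poly hi expr1n divr1 /= invr1 subrr.
rewrite coef_deriv !coef_poly hi expr1n -[_ *+ i.+1]mulr_natr.
rewrite (factS i.+1) natrM.
have h1 := fact_neq0 R i.+1; have h2 := natS_neq0 R i.+1; have h3 := natS_neq0 R i.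
field; by rewrite h1 nat2_neq0.
Qed.

Lemma alt_bin i : \sum_(j < i.+1) ('C(i.+1, j.+1))%:R * (-1) ^+ j = 1 :> R.
Proof.
have := exprDn (1 : R) (-1) i.+1; rewrite subrr expr0n /= big_ord_recl /=.
rewrite expr0 expr1n !mul1r bin0 mulr1n => /eqP; rewrite eq_sym addr_eq0 => /eqP h.
rewrite [RHS]h -sumrN; apply: eq_bigr => j _.
by rewrite expr1n mul1r exprS mulN1r mulNrn opprK mulr_natl.
Qed.

Lemma F4 M : eqm M (sc (-1) (Ee R M) * Ex M 1) (Ee R M).
Proof.
move=> i hi; rewrite coefM coef_poly hi.
transitivity (((i.+1)`!%:R)^-1 * \sum_(j < i.+1) ('C(i.+1, j.+1))%:R * (-1) ^+ j : R); last first.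
  by rewrite alt_bin mulr1.
rewrite mulr_sumr; apply: eq_bigr => [[j hj]] _.
rewrite coef_sc !coef_poly (coef_lt hi hj) (coef_lt' j hi) expr1n.
rewrite [RHS]mulrA fact_splitR; last by [].
by rewrite subSS; ring.
Qed.

Lemma scEx M (c d : R) : sc c (Ex M d) = Ex M (c * d).
Proof.
apply/polyP => i; rewrite coef_sc !coef_poly; case: ifP => _; last by rewrite mulr0.
by rewrite exprMn mulrA.
Qed.

Lemma Fm M : eqm M (sc (-1) (Fb R M)) (Ex M (1:R) * Fb R M).
Proof.
set F := Fb R M; set E := Ee R M.
have h1 : eqm M (sc (-1) F * sc (-1) E) 1 by rewrite -scM -(sc1 (-1)); apply: eqm_sc; apply: F1.
apply: eqm_trans (_ : eqm M _ (sc (-1) F * (E * F))) _.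
  by rewrite -[X in eqm _ X]mulr1; apply: eqmMl; apply: eqm_sym; rewrite mulrC; apply: F1.
apply: eqm_trans (_ : eqm M _ (sc (-1) F * ((sc (-1) E * Ex M 1) * F))) _.
  by apply: eqmMl; apply: eqmMr; apply: eqm_sym; apply: F4.
have -> : sc (-1) F * (sc (-1) E * Ex M 1 * F) = (sc (-1) F * sc (-1) E) * (Ex M 1 * F) by ring.
by rewrite -[X in eqm _ _ X]mul1r; apply: eqmMr.
Qed.

Lemma thetaF M : let F := Fb R M in eqm M (theta F) (F - F ^+ 2 - 'X * F).
Proof.
move=> F; set E := Ee R M.
have hFE : eqm M (F * E) 1 by apply: F1.
have h0 : eqm M (theta F * E + F * theta E) 0.
  by rewrite -thetaM -(theta1 R); apply: eqm_theta.
apply: eqm_trans (_ : eqm M _ (theta F * (F * E))) _.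
  by rewrite -[X in eqm _ X]mulr1; apply: eqmMl; apply: eqm_sym.
apply: eqm_trans (_ : eqm M _ (- F * (F * theta E))) _.
  have -> : theta F * (F * E) = F * (theta F * E) by ring.
  have -> : - F * (F * theta E) = F * (- (F * theta E)) by ring.
  apply: eqmMl; apply: eqm_trans (_ : eqm M _ (theta F * E + F * theta E - F * theta E)) _.
    by apply: eqm_eq; ring.
  by rewrite -[X in eqm _ _ X]add0r; apply: eqmB.
apply: eqm_trans (_ : eqm M _ (- F * (F * (1 + 'X * E - E)))) _.
  apply: eqmMl; apply: eqmMl; apply: eqm_trans (@thetaEe M) _.
  apply: eqmB => //; have := @F3 M 1; rewrite /eqm => h i hi.
  have := h i hi; rewrite coefB coef1 coefD coef1 coefCM mul1r !coefXM coef_sc expr1n mul1r.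
  by case: (i == 0)%N => /= e; rewrite -[in RHS]e; ring.
have -> : - F * (F * (1 + 'X * E - E)) = - F ^+ 2 - 'X * F * (F * E) + F * (F * E) by ring.
have -> : F - F ^+ 2 - 'X * F = - F ^+ 2 - 'X * F * 1 + F * 1 by ring.
by apply: eqmD; [apply: eqmB => //; apply: eqmMl | apply: eqmMl].
Qed.

End Ser.


Section Gx.
Variable R : numFieldType.

Definition Gx M r (x : R) : {poly R} := \poly_(i < M) (bernpoly_ord r i x / (i`!)%:R).

Lemma Gx_eq M r x : eqm M (Gx M r x) (Fb R M ^+ r * Ex M x).
Proof.
elim: r => [|r IH].
  by rewrite expr0 mul1r => i hi; rewrite !coef_poly hi.
rewrite exprS -mulrA; apply: eqm_trans (eqmMl _ IH).
move=> i hi; rewrite coef_poly hi coefM /= mulr_suml; apply: eq_bigr => [[j hj]] _.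
rewrite !coef_poly (coef_lt hi hj) (coef_lt' j hi) /=.
rewrite -mulrA (mulrC (_ * _)) -!mulrA (mulrA _ ('C(i, j))%:R) fact_splitR; last by rewrite -ltnS.
ring.
Qed.

Lemma coefQ M r i : (i < M)%N -> (Fb R M ^+ r)`_i = bernnum_ord R r i / (i`!)%:R.
Proof.
move=> hi; have h := @Gx_eq M r 0.
have h2 : eqm M (Fb R M ^+ r * Ex M 0) (Fb R M ^+ r).
  by rewrite -[X in eqm _ _ X]mulr1; apply: eqmMl; apply: Ex0.
by have := (eqm_trans h h2) i hi; rewrite coef_poly hi => <-.
Qed.

Lemma coef_theta (p : {poly R}) m : (theta p)`_m = m%:R * p`_m.
Proof.
rewrite /theta coefXM; case: m => [|m] /=; first by rewrite mul0r.
by rewrite coef_deriv mulr_natl.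
Qed.

Lemma thetaQ M r : eqm M (theta (Fb R M ^+ r.+1))
  ((r.+1)%:R%:P * (Fb R M ^+ r.+1 - Fb R M ^+ r.+2 - 'X * Fb R M ^+ r.+1)).
Proof.
have hF := @thetaF R M; simpl in hF.
rewrite thetaX; apply: eqm_trans (eqmMl _ hF) _.
apply: eqm_eq; rewrite !exprS expr0; ring.
Qed.

Lemma bern_recur r m : bernnum_ord R r.+2 m =
  bernnum_ord R r.+1 m - m%:R / r.+1%:R * bernnum_ord R r.+1 m
  - m%:R * bernnum_ord R r.+1 m.-1.
Proof.
have := @thetaQ m.+1 r m (ltnSn m).
have hm1 : (m.-1 < m.+1)%N by rewrite (leq_ltn_trans (leq_pred m)).
rewrite coef_theta coefCM !coefB coefXM !coefQ //.
have hr := natS_neq0 R r.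
clear hm1; case: m => [|m] /=.
  rewrite fact0 !divr1 mul0r subr0 => /esym /eqP; rewrite mulf_eq0 (negbTE hr) /= subr_eq0.
  by move=> /eqP <-; rewrite !mul0r !subr0.
move=> e.
have hf := fact_neq0 R m; have hm := natS_neq0 R m.
move: e; generalize (bernnum_ord R r.+1 m.+1) (bernnum_ord R r.+2 m.+1) (bernnum_ord R r.+1 m) => A X C e.
have hX : X / (m.+1)`!%:R = A / (m.+1)`!%:R - C / m`!%:R
   - m.+1%:R * (A / (m.+1)`!%:R) / r.+1%:R.
  by rewrite e; field; rewrite nat1_neq0 hf fact_neq0.
have -> : X = X / (m.+1)`!%:R * (m.+1)`!%:R by field; rewrite fact_neq0.
rewrite hX factS natrM; field; by rewrite !nat1_neq0 hf.
Qed.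

End Gx.


Lemma stir_rec r l : stirling1 r.+1 l =
  (if l is l'.+1 then stirling1 r l' else 0) - r%:R * stirling1 r l.
Proof.
rewrite /stirling1 big_ord_recr /= mulrBr coefB coefMX coefMC mulrC.
by case: l.
Qed.

Lemma stir0 l : stirling1 0 l = (l == 0)%:R.
Proof. by rewrite /stirling1 big_ord0 coef1. Qed.

Lemma stir_r0 r : stirling1 r.+1 0 = 0.
Proof.
elim: r => [|r IH]; first by rewrite stir_rec stir0 mul0r subr0.
by rewrite stir_rec IH mulr0 subr0.
Qed.

Lemma stir_big r l : (r < l)%N -> stirling1 r l = 0.
Proof.
elim: r l => [|r IH] l hl; first by rewrite stir0; case: l hl.
case: l hl => [|l] // hl.
by rewrite stir_rec !IH // ?mulr0 ?subr0 // ltnW.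
Qed.

Lemma stir_rr r : stirling1 r r = 1.
Proof.
elim: r => [|r IH]; first by rewrite stir0.
by rewrite stir_rec IH stir_big // mulr0 subr0.
Qed.

Section SR.
Variable R : numFieldType.

Lemma stir_recR r l : (stirling1 r.+1 l.+1)%:~R =
  (stirling1 r l)%:~R - r%:R * (stirling1 r l.+1)%:~R :> R.
Proof. by rewrite stir_rec intrB intrM /= rmorph_nat. Qed.

Lemma bpo1_0 m : bernnum_ord R 1 m = bernoulli R m.
Proof.
rewrite /bernnum_ord /= big_ord_recr /= subnn expr0 binn mulr1 mul1r.
rewrite big1 ?add0r // => [[k hk]] _ /=.
by rewrite expr0n subn_eq0 leqNgt hk /= mulr0.
Qed.

Lemma natCneq0 n m : (m <= n)%N -> ('C(n, m))%:R != 0 :> R.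
Proof. by move=> h; rewrite pnatr_eq0 -lt0n bin_gt0. Qed.

Lemma algB (S1 S2 C1 a b : R) : C1 != 0 -> a != 0 -> b != 0 -> a + b != 0 ->
  S1 / (b * C1 / (a + b)) - a / (a + b) * (S1 / (b * C1 / (a + b)))
  - a * (S2 / (a * C1 / (a + b))) = (S1 - (a + b) * S2) / C1.
Proof. by move=> h1 h2 h3 h4; field; rewrite h1 h2 h3 h4. Qed.

Lemma bernB r m : (m <= r)%N ->
  bernnum_ord R r.+1 m = (stirling1 r.+1 (r.+1 - m))%:~R / ('C(r, m))%:R.
Proof.
elim: r m => [|r IH] m hm.
  move: hm; rewrite leqn0 => /eqP ->; rewrite bpo1_0 bin0 divr1 stir_rr.
  by [].
rewrite bern_recur.
have hr := natS_neq0 R r.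
have [hmr|->] : (m < r.+1)%N \/ m = r.+1 by lia.
  2: {
  rewrite divff // mul1r subrr sub0r /= IH // !subSnn !binn !divr1.
  by rewrite (stir_recR r.+1 0) stir_r0 /= sub0r.
  }
clear hm; case: m hmr => [|m] hmr.
  by rewrite !mul0r !subr0 IH // !subn0 !bin0 !divr1 !stir_rr.
have hmr' : (m < r)%N by [].
rewrite /= IH // IH; last by apply: ltnW.
have [t ->] : exists t, r = (m.+1 + t)%N by exists (r - m.+1)%N; lia.
have -> : ((m.+1 + t).+1 - m.+1 = t.+1)%N by lia.
have -> : ((m.+1 + t).+2 - m.+1 = t.+2)%N by lia.
have -> : ((m.+1 + t).+1 - m = t.+2)%N by lia.
rewrite (stir_recR (m.+1 + t).+1 t.+1).
have e1 := mul_bin_down (m.+1 + t).+1 m.+1.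
have e2 := mul_bin_diag (m.+1 + t).+1 m.
have ht : ((m.+1 + t).+1 - m.+1 = t.+1)%N by lia.
rewrite ht in e1.
move: e1 e2 => /(congr1 (fun k => k%:R : R)) e1 /(congr1 (fun k => k%:R : R)) e2.
rewrite !natrM /= in e1 e2.
have hC1 : ('C((m.+1 + t).+1, m.+1))%:R != 0 :> R by apply: natCneq0; lia.
have hN : ((m.+1 + t).+1)%:R = m.+1%:R + t.+1%:R :> R by rewrite -natrD addnS.
have hCn1 : ('C(m.+1 + t, m.+1))%:R = t.+1%:R * ('C((m.+1 + t).+1, m.+1))%:R / ((m.+1 + t).+1)%:R :> R.
  by rewrite -e1 mulrAC divff ?natS_neq0 // mul1r.
have hCn0 : ('C(m.+1 + t, m))%:R = m.+1%:R * ('C((m.+1 + t).+1, m.+1))%:R / ((m.+1 + t).+1)%:R :> R.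
  by rewrite -e2 mulrAC divff ?natS_neq0 // mul1r.
rewrite hCn1 hCn0 hN.
apply: algB; rewrite ?natS_neq0 //.
by rewrite -hN natS_neq0.
Qed.


End SR.


Section SC.
Variable R : numFieldType.

Definition cb (i : nat) : R := bernoulli R i / i%:R.

Definition T r d : R := \sum_(j < r) (-1) ^+ j * (stirling1 r j.+1)%:~R * cb (d + j.+1).

Lemma TS r d : T r.+2 d = - T r.+1 d.+1 - r.+1%:R * T r.+1 d.
Proof.
rewrite /T.
transitivity (\sum_(j < r.+2) ((-1) ^+ j * (stirling1 r.+1 j)%:~R * cb (d + j.+1))
   - r.+1%:R * \sum_(j < r.+2) ((-1) ^+ j * (stirling1 r.+1 j.+1)%:~R * cb (d + j.+1))).
  rewrite mulr_sumr -sumrB; apply: eq_bigr => j _.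
  rewrite stir_recR; ring.
congr (_ - _).
  rewrite big_ord_recl /= stir_r0 /= mulr0 mul0r add0r -sumrN.
  apply: eq_bigr => j _ /=; rewrite exprS /bump /= add1n addSnnS; ring.
by rewrite big_ord_recr /= stir_big // mulr0 mul0r addr0.
Qed.

Lemma algC (b c K T0 T1 : R) : b != 0 -> c != 0 -> c + 1 - b != 0 ->
  (c + 1) * ((c + 1 - b) * K / b) * T1 -
  (c + 1) / (c + 1 - b) * ((c + 1) * ((c + 1 - b) * K / b) * T1) -
  (c + 1) * (c * ((c + 1 - b) * K / c) * T0) =
  (c + 1) * K * (- T1 - (c + 1 - b) * T0).
Proof. by move=> h1 h2 h3; field; rewrite h1 h2 h3. Qed.

Lemma bernC r d : bernnum_ord R r.+1 (r.+1 + d) =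
  (r.+1 + d)%:R * ('C(r + d, r))%:R * T r.+1 d.
Proof.
elim: r d => [|r IH] d.
  rewrite bpo1_0 /T big_ord1 expr0 mul1r stir_rr /= mul1r bin0 mulr1 /cb add1n addn1.
  by field; rewrite nat1_neq0.
rewrite bern_recur.
have -> : ((r.+2 + d).-1 = r.+1 + d)%N by lia.
have -> : (r.+2 + d = r.+1 + d.+1)%N by lia.
rewrite !IH TS.
have e1 := mul_bin_left (r + d.+1) r.
have e2 := mul_bin_diag (r.+1 + d) r.
have ht : (r + d.+1 - r = d.+1)%N by lia.
rewrite ht in e1.
move: e1 e2 => /(congr1 (fun k => k%:R : R)) e1 /(congr1 (fun k => k%:R : R)) e2.
rewrite !natrM /= in e1 e2.
have hK : 'C(r + d.+1, r.+1) = 'C(r.+1 + d, r.+1) by rewrite addnS.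
rewrite hK in e1.
have hd := natS_neq0 R d; have hr := natS_neq0 R r; have hc := natS_neq0 R (r + d).
have hC1 : ('C(r + d.+1, r))%:R = r.+1%:R * ('C(r.+1 + d, r.+1))%:R / d.+1%:R :> R.
  by rewrite e1 mulrAC divff // mul1r.
have hC0 : ('C(r + d, r))%:R = r.+1%:R * ('C(r.+1 + d, r.+1))%:R / (r.+1 + d)%:R :> R.
  by rewrite -e2 mulrAC divff ?addSn // mul1r.
rewrite hC1 hC0.
have hN : (r.+1 + d.+1)%:R = (r.+1 + d)%:R + 1 :> R by rewrite addnS -addn1 natrD.
have hN2 : r.+1%:R = (r.+1 + d)%:R + 1 - d.+1%:R :> R.
  by rewrite -hN natrD addrK.
rewrite hN hN2; apply: algC; rewrite -?hN2 // addSn //.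
Qed.

End SC.


Section MainA.
Variable R : numFieldType.

Definition Hp M r : {poly R} :=
  \poly_(i < M.+1) (((-1) ^+ i.+1 - 1) * (Fb R M.+1 ^+ r)`_i.+1 / r%:R).

Lemma mainA M r : (0 < r)%N ->
  eqm M (Hp M r * sc r%:R (Fb R M.+1)) (Fb R M.+1 ^+ r).
Proof.
move=> hr0.
have hr : r%:R != 0 :> R by rewrite pnatr_eq0 -lt0n.
set F := Fb R M.+1; set Q := F ^+ r; set H := Hp M r.
have c1 : eqm M.+1 (r%:R%:P * ('X * H)) (sc (-1) Q - Q).
  move=> i hi; rewrite coefCM coefXM coefB coef_sc.
  case: i hi => [|i] hi /=; first by rewrite expr0 mul1r subrr mulr0.
  rewrite /H /Hp coef_poly (ltnW hi) -/F -/Q; by field.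
have c2 : eqm M.+1 (sc (-1) Q) (Ex M.+1 r%:R * Q).
  rewrite /Q scX; apply: eqm_trans (eqmX _ (@Fm R M.+1)) _.
  by rewrite exprMn; apply: eqmMr; apply: ExX.
have c3 : eqm M.+1 (sc r%:R F * (Ex M.+1 r%:R - 1)) (r%:R%:P * 'X).
  apply: eqm_trans (eqmMl _ (@F3 R M.+1 r%:R)) _.
  have -> : sc r%:R F * (r%:R%:P * ('X * sc r%:R (Ee R M.+1)))
     = (r%:R%:P * 'X) * (sc r%:R F * sc r%:R (Ee R M.+1)) by ring.
  rewrite -[X in eqm _ _ X]mulr1; apply: eqmMl.
  by rewrite -scM -(sc1 r%:R); apply: eqm_sc; apply: F1.
have c4 : eqm M.+1 ('X * (r%:R%:P * (H * sc r%:R F))) ('X * (r%:R%:P * Q)).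
  have -> : 'X * (r%:R%:P * (H * sc r%:R F)) = (r%:R%:P * ('X * H)) * sc r%:R F by ring.
  apply: eqm_trans (eqmMr _ c1) _.
  apply: eqm_trans (eqmMr _ (eqmB c2 (@eqm_refl _ M.+1 Q))) _.
  have -> : (Ex M.+1 r%:R * Q - Q) * sc r%:R F = Q * (sc r%:R F * (Ex M.+1 r%:R - 1)) by ring.
  apply: eqm_trans (eqmMl _ c3) _.
  by apply: eqm_eq; ring.
have c5 := eqm_Xcancel c4.
have -> : H * sc r%:R F = (r%:R^-1)%:P * (r%:R%:P * (H * sc r%:R F)).
  by rewrite !mulrA -polyCM mulVf // polyC1 mul1r.
have -> : Q = (r%:R^-1)%:P * (r%:R%:P * Q).
  by rewrite mulrA -polyCM mulVf // polyC1 mul1r.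
by apply: eqmMl.
Qed.

Lemma main_coef n r (x : R) : (0 < r)%N ->
  bernpoly_ord r n x = \sum_(m < n.+1) ('C(n, m))%:R *
     ((((-1) ^+ m.+1 - 1) * bernnum_ord R r m.+1 / (m.+1)%:R) / r%:R) *
     (r%:R ^+ (n - m) * bernpoly (n - m) (x / r%:R)).
Proof.
move=> hr0.
have hr : r%:R != 0 :> R by rewrite pnatr_eq0 -lt0n.
set F := Fb R n.+2.
have h1 := @Gx_eq R n.+2 r x.
have h2 := @mainA n.+1 r hr0.
have h3 := @Gx_eq R n.+2 1 (x / r%:R).
have k1 : (Gx n.+2 r x)`_n = (Hp n.+1 r * sc r%:R (Gx n.+2 1 (x / r%:R)))`_n.
  rewrite (h1 n (leqW (ltnSn n))).
  rewrite -/F (eqmMr _ (eqm_sym h2) (ltnSn n)) -mulrA.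
  rewrite (eqmMl _ (eqm_sc _ h3) (leqW (ltnSn n))) expr1 scM scEx.
  by rewrite [r%:R * _]mulrC mulfVK.
move: k1; rewrite coef_poly (leqW (ltnSn n)) coefM.
move=> /(congr1 (fun z => z * (n`!)%:R)); rewrite mulfVK ?fact_neq0 // => ->.
rewrite mulr_suml; apply: eq_bigr => [[m hm]] _ /=.
rewrite coef_sc !coef_poly (leqW hm) coefQ // (leq_ltn_trans (leq_subr _ _) (leqW (ltnSn n))).
have hmn : (m <= n)%N by rewrite -ltnS.
have hC : ('C(n, m))%:R = (n`!)%:R * ((m`!)%:R)^-1 * (((n - m)`!)%:R)^-1 :> R.
  by rewrite -mulrA -fact_splitR // mulrA divff ?fact_neq0 // mul1r.
rewrite hC /bernpoly factS natrM.
have h1' := fact_neq0 R m; have h2' := fact_neq0 R (n - m); have h3' := natS_neq0 R m.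
field; by rewrite h1' h2' nat1_neq0 hr.
Qed.

End MainA.


Lemma sum_pairs (R : numFieldType) (g : nat -> R) K :
  \sum_(i < 2 * K) g i = \sum_(k < K) (g (2 * k)%N + g (2 * k + 1)%N).
Proof.
elim: K => [|K IH]; first by rewrite muln0 !big_ord0.
have -> : (2 * K.+1 = (2 * K).+2)%N by lia.
rewrite !big_ord_recr /= IH -addrA; congr (_ + (_ + _)).
by rewrite addn1.
Qed.

Lemma sum_even (R : numFieldType) (f : nat -> R) n :
  (forall k, f (2 * k + 1)%N = 0) ->
  \sum_(m < n.+1) f m = \sum_(k < n.+1 | (2 * k <= n)%N) f (2 * k)%N.
Proof.
move=> hodd.
rewrite (big_ord_widen (2 * n.+1) f); last by lia.
rewrite big_mkcond /= (sum_pairs (fun i => if (i < n.+1)%N then f i else 0)).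
rewrite [RHS]big_mkcond /=; apply: eq_bigr => k _.
rewrite hodd; case: ifP; case: ifP => //; try lia.
by rewrite addr0.
by rewrite addr0.
by rewrite addr0.
Qed.

Lemma T_eq (R : numFieldType) r d :
  \sum_(1 <= j < r.+1) (-1) ^+ (j - 1) * (stirling1 r j)%:~R
        * (bernoulli R (d + j) / (d + j)%:R) = T R r d.
Proof.
rewrite big_add1 /= big_mkord; apply: eq_bigr => j _.
by rewrite subn1 /= /cb.
Qed.

Theorem mainTheorem7 (R : numFieldType) (n r : nat) (x : R)
  (hr : (2 <= r)%N) (hnr : (r <= n)%N) :
  bernpoly_ord r n x =
    - 2%:R * r%:R ^+ n.-1 *
      \sum_(k < r | (2 * k + 1 <= r - 1)%N)
        (r%:R ^+ (2 * k))^-1 * ((stirling1 r (r - (2 * k + 1)))%:~R / (2 * k + 1)%:R)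
        * (('C(n, 2 * k))%:R / ('C(r - 1, 2 * k + 1))%:R)
        * bernpoly (n - 2 * k) (x / r%:R)
    - 2%:R * r%:R ^+ n.-1 *
      \sum_(k < n.+1 | (r <= 2 * k + 1)%N && (2 * k <= n)%N)
        (r%:R ^+ (2 * k))^-1 * (bernnum_ord R r (2 * k + 1) / (2 * k + 1)%:R)
        * ('C(n, 2 * k))%:R * bernpoly (n - 2 * k) (x / r%:R)
  /\
  (forall k : nat, (r <= 2 * k + 1)%N ->
     bernnum_ord R r (2 * k + 1) / (2 * k + 1)%:R =
       ('C(2 * k, r - 1))%:R *
       \sum_(1 <= j < r.+1)
         (-1) ^+ (j - 1) * (stirling1 r j)%:~R
         * (bernoulli R (2 * k + 1 - r + j) / (2 * k + 1 - r + j)%:R)).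
Proof.
have hr0 : (0 < r)%N by lia.
have hrR : r%:R != 0 :> R by rewrite pnatr_eq0 -lt0n.
split; last first.
  move=> k hk; rewrite T_eq.
  case: r hr hnr hr0 hrR hk => [//|r'] hr hnr hr0 hrR hk.
  have [d hd] : exists d, (2 * k + 1 = r'.+1 + d)%N by exists (2 * k + 1 - r'.+1)%N; lia.
  rewrite hd.
  have -> : (r'.+1 + d - r'.+1 = d)%N by lia.
  have -> : (r'.+1 - 1 = r')%N by lia.
  have -> : (2 * k = r' + d)%N by lia.
  rewrite bernC.
  by field; rewrite -addrA -natrD nat1_neq0.
rewrite (@main_coef R n r x hr0).
rewrite (@sum_even R (fun m => 'C(n, m)%:R * ((((-1) ^+ m.+1 - 1) * bernnum_ord R r m.+1
   / (m.+1)%:R) / r%:R) * (r%:R ^+ (n - m) * bernpoly (n - m) (x / r%:R))) n); last first.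
  move=> k /=; have -> : ((2 * k + 1).+1 = 2 * k.+1)%N by lia.
  by rewrite exprM expr2 mulN1r opprK expr1n subrr !mul0r mulr0 mul0r.
set U := fun k : nat => (r%:R ^+ (2 * k))^-1 * (bernnum_ord R r (2 * k + 1) / (2 * k + 1)%:R)
        * ('C(n, 2 * k))%:R * bernpoly (n - 2 * k) (x / r%:R).
transitivity (\sum_(k < n.+1 | (2 * k <= n)%N) (- 2%:R * r%:R ^+ n.-1) * U k).
  apply: eq_bigr => [[k hk0]] /= hk; clear hk0.
  rewrite /U exprS mulN1r.
  have e1 : r%:R ^+ (n - 2 * k) = r%:R ^+ n / r%:R ^+ (2 * k) :> R.
    by rewrite -{2}(subnK hk) exprD mulfK // expf_neq0.
  have e2 : r%:R ^+ n.-1 = r%:R ^+ n / r%:R :> R.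
    have hn1 : n = n.-1.+1 by lia.
    by rewrite {2}hn1 exprS mulrAC divff // mul1r.
  rewrite e1 e2 addn1.
  have h3 := natS_neq0 R (2 * k); have h4 : r%:R ^+ (2 * k) != 0 :> R by rewrite expf_neq0.
  rewrite exprM expr2 mulN1r opprK expr1n.
  by field; rewrite -natrM nat1_neq0 h4 hrR.

have hB : forall m, (m <= r - 1)%N ->
    bernnum_ord R r m = (stirling1 r (r - m))%:~R / ('C(r - 1, m))%:R.
  move=> m hm; case: (r) hr hm => [//|r'] _ hm.
  have e : (r'.+1 - 1 = r')%N by lia.
  by rewrite e in hm *; apply: bernB.
rewrite -mulr_sumr (bigID (fun k : 'I_n.+1 => (r <= 2 * k + 1)%N)) /=.
have hS2 : \sum_(k < n.+1 | (2 * k <= n)%N && (r <= 2 * k + 1)%N) U k =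
   \sum_(k < n.+1 | (r <= 2 * k + 1)%N && (2 * k <= n)%N)
     (r%:R ^+ (2 * k))^-1 * (bernnum_ord R r (2 * k + 1) / (2 * k + 1)%:R)
        * ('C(n, 2 * k))%:R * bernpoly (n - 2 * k) (x / r%:R).
  by apply: eq_bigl => k; rewrite andbC.
have hS1 : \sum_(k < n.+1 | (2 * k <= n)%N && ~~ (r <= 2 * k + 1)%N) U k =
   \sum_(k < r | (2 * k + 1 <= r - 1)%N)
        (r%:R ^+ (2 * k))^-1 * ((stirling1 r (r - (2 * k + 1)))%:~R / (2 * k + 1)%:R)
        * (('C(n, 2 * k))%:R / ('C(r - 1, 2 * k + 1))%:R)
        * bernpoly (n - 2 * k) (x / r%:R).
  rewrite (@big_ord_widen_cond _ 0 +%R r n.+1 (fun k => (2 * k + 1 <= r - 1)%N)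
    (fun k => (r%:R ^+ (2 * k))^-1 * ((stirling1 r (r - (2 * k + 1)))%:~R / (2 * k + 1)%:R)
        * (('C(n, 2 * k))%:R / ('C(r - 1, 2 * k + 1))%:R)
        * bernpoly (n - 2 * k) (x / r%:R))); last by lia.
  apply: eq_big => [k|k hk]; first by lia.
  have hk' : (2 * k + 1 <= r - 1)%N by move: hk; lia.
  have hC := natCneq0 R hk'.
  rewrite /U hB //; field; by rewrite hC addrC -natrM nat1_neq0 expf_neq0.
rewrite hS1 hS2; ring.
Qed.
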